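(* Let $X$ be a minimal dendric shift over $\mathcal{A}_3=\{1,2,3\}$, let $\boldsymbol\sigma=(\sigma_n)_{n\ge1}$ be a primitive $\Sigma_3\mathcal{S}_3\Sigma_3$-adic representation of $X$, and let $\lambda_1,\lambda_2,\lambda_3$ be the letter frequencies of $X$. Suppose $\sigma_1\in\{\alpha,\pi_{132}\eta\pi_{321},\pi_{312}\beta\pi_{213},\pi_{213}\gamma\}\cup\{\pi_{213}\delta^{(k)}:k\ge1\}$. Then: $\lambda_1>\lambda_2+\lambda_3$ iff $\sigma_1=\alpha$; $\lambda_2,\lambda_3<\lambda_1<\lambda_2+\lambda_3$ iff $\sigma_1=\pi_{132}\eta\pi_{321}$; $\lambda_2<\lambda_1<\lambda_3$ iff $\sigma_1=\pi_{312}\beta\pi_{213}$; $\lambda_3<\lambda_1<\lambda_2$ iff $\sigma_1=\pi_{213}\gamma$; and, for $k\ge1$, ($\lambda_1<\lambda_2$, $\lambda_1<\lambda_3$ and $k\lambda_1<\lambda_3<(k+1)\lambda_1$) iff $\sigma_1=\pi_{213}\delta^{(k)}$.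
   Context: A shift space over $\mathcal{A}$ is a closed shift-invariant $X\subseteq\mathcal{A}^{\mathbb{Z}}$ in which all letters occur, with factor set $\mathcal{L}(X)$; minimal if its only closed shift-invariant subsets are $\emptyset,X$; dendric if for each $w\in\mathcal{L}(X)$ the bipartite graph with left vertices $\{a:aw\in\mathcal{L}(X)\}$, right vertices $\{b:wb\in\mathcal{L}(X)\}$ and edges $\{a,b\}$ for $awb\in\mathcal{L}(X)$ is a tree. $X$ has letter frequencies $(\lambda_a)_{a\in\mathcal{A}}$ if for all $x\in X$ and $a$, $\lim_n|x_1\cdots x_n|_a/n=\lambda_a$; minimal dendric shifts over $\mathcal{A}_3$ are known to be uniquely ergodic and hence to have letter frequencies. A directive sequence $(\sigma_n)$ of non-erasing morphisms is primitive if for each $n$ there is $N>n$ such that every letter occurs in $\sigma_n\cdots\sigma_{N-1}(b)$ for all letters $b$; it represents the shift of bi-infinite words all of whose factors occur in some $\sigma_1\cdots\sigma_{N-1}(a)$. $\pi_{abc}$ is the morphism $1\mapsto a,2\mapsto b,3\mapsto c$; $\Sigma_3$ the set of these; juxtaposition is composition. $\mathcal{S}_3=\{\alpha,\beta,\gamma,\eta\}\cup\{\delta^{(k)},\zeta^{(k)}:k\ge1\}$ with $\alpha:1\mapsto1,2\mapsto12,3\mapsto13$; $\beta:1\mapsto1,2\mapsto12,3\mapsto132$; $\gamma:1\mapsto1,2\mapsto12,3\mapsto123$; $\delta^{(k)}:1\mapsto1,2\mapsto123^k,3\mapsto123^{k+1}$; $\zeta^{(k)}:1\mapsto13^k,2\mapsto12,3\mapsto13^{k+1}$;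 $\eta:1\mapsto13,2\mapsto12,3\mapsto123$; a $\Sigma_3\mathcal{S}_3\Sigma_3$-adic representation has each $\sigma_n=\pi\sigma\pi'$ with $\pi,\pi'\in\Sigma_3$, $\sigma\in\mathcal{S}_3$. *)

(* Defs.v *)
From Stdlib Require Import Reals ZArith List Arith Relations.
Import ListNotations.

Inductive letter : Type := l1 | l2 | l3.

Definition letter_eqb (a b : letter) : bool :=
  match a, b with
  | l1, l1 | l2, l2 | l3, l3 => true
  | _, _ => false
  end.

Definition word := list letter.
Definition biword := Z -> letter.
Definition subshift := biword -> Prop.

Definition shift (x : biword) : biword := fun i => x (i + 1)%Z.

Definition window (x : biword) (i : Z) (n : nat) : word :=
  map (fun j => x (i + Z.of_nat j)%Z) (seq 0 n).

Definition is_factor (w u : word) : Prop := exists p s, u = p ++ w ++ s.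

Definition factor_of (w : word) (x : biword) : Prop :=
  exists i, w = window x i (length w).

Definition lang (X : subshift) (w : word) : Prop :=
  exists x, X x /\ factor_of w x.

(* Closed in the product topology of A^Z *)
Definition closed_set (X : subshift) : Prop :=
  forall x : biword,
    (forall n : nat, exists y, X y /\ forall i, (Z.abs i <= Z.of_nat n)%Z -> y i = x i) ->
    X x.

Definition shift_invariant (X : subshift) : Prop :=
  forall x, X x <-> X (shift x).

Definition shift_space (X : subshift) : Prop :=
  closed_set X /\ shift_invariant X /\ forall a : letter, lang X [a].

Definition subset_of (Y X : subshift) : Prop := forall x, Y x -> X x.
Definition set_equal (Y X : subshift) : Prop := forall x, Y x <-> X x.
Definition empty_set (Y : subshift) : Prop := forall x, ~ Y x.

Definition minimal (X : subshift) : Prop :=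
  forall Y : subshift, subset_of Y X -> closed_set Y -> shift_invariant Y ->
    empty_set Y \/ set_equal Y X.

Definition graph_connected {V : Type} (vert : V -> Prop) (E : V -> V -> Prop) : Prop :=
  forall u v, vert u -> vert v ->
    clos_refl_trans V (fun p q => vert p /\ vert q /\ E p q) u v.

Definition graph_acyclic {V : Type} (d : V) (vert : V -> Prop) (E : V -> V -> Prop) : Prop :=
  ~ exists c : list V,
      3 <= length c /\ NoDup c /\ Forall vert c /\
      forall i, i < length c -> E (nth i c d) (nth ((i + 1) mod length c) c d).

Definition is_tree {V : Type} (d : V) (vert : V -> Prop) (E : V -> V -> Prop) : Prop :=
  graph_connected vert E /\ graph_acyclic d vert E.

(* Extension graph of w in X: left vertices inl a with aw in L(X),
   right vertices inr b with wb in L(X), edges {a,b} with awb in L(X). *)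
Definition ext_vert (X : subshift) (w : word) (v : letter + letter) : Prop :=
  match v with
  | inl a => lang X (a :: w)
  | inr b => lang X (w ++ [b])
  end.

Definition ext_edge (X : subshift) (w : word) (u v : letter + letter) : Prop :=
  match u, v with
  | inl a, inr b => lang X (a :: w ++ [b])
  | inr b, inl a => lang X (a :: w ++ [b])
  | _, _ => False
  end.

Definition dendric (X : subshift) : Prop :=
  forall w, lang X w -> is_tree (inl l1) (ext_vert X w) (ext_edge X w).

Fixpoint count_letter (x : biword) (a : letter) (n : nat) : nat :=
  match n with
  | O => O
  | S m => count_letter x a m + (if letter_eqb (x (Z.of_nat (S m))) a then 1 else 0)
  end.

Definition has_letter_frequencies (X : subshift) (lam : letter -> R) : Prop :=
  forall x, X x -> forall a,
    Un_cv (fun n => (INR (count_letter x a n) / INR n)%R) (lam a).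

Definition morphism := letter -> word.

Definition apply_morph (f : morphism) (w : word) : word := flat_map f w.

(* juxtaposition = composition: (f g)(a) = f(g(a)) *)
Definition mcomp (f g : morphism) : morphism := fun a => apply_morph f (g a).

Definition mid : morphism := fun a => [a].

Definition same_morph (f g : morphism) : Prop := forall a, f a = g a.

Definition non_erasing (f : morphism) : Prop := forall a, f a <> [].

Fixpoint prodseg (sigma : nat -> morphism) (m k : nat) : morphism :=
  match k with
  | O => mid
  | S k' => mcomp (sigma m) (prodseg sigma (S m) k')
  end.

(* Directive sequences are indexed from 1: (sigma n)_{n >= 1}; sigma 0 is unused. *)
Definition directive (sigma : nat -> morphism) : Prop :=
  forall n, 1 <= n -> non_erasing (sigma n).

Definition is_primitive (sigma : nat -> morphism) : Prop :=
  forall n, 1 <= n -> exists N, n < N /\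
    forall a b, In a (prodseg sigma n (N - n) b).

Definition represents (sigma : nat -> morphism) (X : subshift) : Prop :=
  forall x, X x <->
    (forall i n, exists N a, 1 <= N /\ is_factor (window x i n) (prodseg sigma 1 (N - 1) a)).

Definition pi (a b c : letter) : morphism :=
  fun l => match l with l1 => [a] | l2 => [b] | l3 => [c] end.

Definition in_Sigma3 (f : morphism) : Prop :=
  exists a b c, a <> b /\ a <> c /\ b <> c /\ same_morph f (pi a b c).

Definition alpha : morphism :=
  fun l => match l with l1 => [l1] | l2 => [l1; l2] | l3 => [l1; l3] end.
Definition beta : morphism :=
  fun l => match l with l1 => [l1] | l2 => [l1; l2] | l3 => [l1; l3; l2] end.
Definition gamma : morphism :=
  fun l => match l with l1 => [l1] | l2 => [l1; l2] | l3 => [l1; l2; l3] end.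
Definition delta (k : nat) : morphism :=
  fun l => match l with
           | l1 => [l1]
           | l2 => [l1; l2] ++ repeat l3 k
           | l3 => [l1; l2] ++ repeat l3 (S k)
           end.
Definition zeta (k : nat) : morphism :=
  fun l => match l with
           | l1 => l1 :: repeat l3 k
           | l2 => [l1; l2]
           | l3 => l1 :: repeat l3 (S k)
           end.
Definition eta : morphism :=
  fun l => match l with l1 => [l1; l3] | l2 => [l1; l2] | l3 => [l1; l2; l3] end.

Definition in_S3 (f : morphism) : Prop :=
  same_morph f alpha \/ same_morph f beta \/ same_morph f gamma \/ same_morph f eta \/
  (exists k, 1 <= k /\ same_morph f (delta k)) \/
  (exists k, 1 <= k /\ same_morph f (zeta k)).

Definition SSS_adic (sigma : nat -> morphism) : Prop :=
  forall n, 1 <= n -> exists p s p', in_Sigma3 p /\ in_S3 s /\ in_Sigma3 p' /\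
    same_morph (sigma n) (mcomp (mcomp p s) p').

(* Main.v *)
Require Import Defs.
From Stdlib Require Import Reals ZArith List Arith Lia Lra Psatz.
Import ListNotations.

Fixpoint cnt (a : letter) (w : word) : nat :=
  match w with [] => 0 | b :: w' => (if letter_eqb b a then 1 else 0) + cnt a w' end.

Lemma cnt_app a u v : cnt a (u ++ v) = cnt a u + cnt a v.
Proof. induction u; simpl; lia. Qed.

Lemma cnt_le_len a w : cnt a w <= length w.
Proof. induction w as [|b w IH]; simpl; [lia|]. destruct (letter_eqb b a); lia. Qed.

Lemma cnt_In a w : In a w -> 1 <= cnt a w.
Proof.
  induction w as [|b w IH]; simpl; [tauto|]. intros [->|H].
  - destruct a; simpl; lia.
  - specialize (IH H). lia.
Qed.

Lemma cnt_factor a u w : is_factor u w ->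
  cnt a u <= cnt a w /\ cnt a w <= cnt a u + (length w - length u).
Proof.
  intros [p [s ->]]. rewrite !cnt_app, !length_app.
  pose proof (cnt_le_len a p); pose proof (cnt_le_len a s). lia.
Qed.

Lemma cnt_flat a f v : cnt a (flat_map f v) =
  cnt a (f l1) * cnt l1 v + cnt a (f l2) * cnt l2 v + cnt a (f l3) * cnt l3 v.
Proof. induction v as [|b v IH]; simpl; [lia|]. rewrite cnt_app, IH. destruct b; simpl; nia. Qed.

Lemma len_flat (f : morphism) (v : word) m : (forall b, length (f b) <= m) -> length (flat_map f v) <= m * length v.
Proof. intros H. induction v as [|b v IH]; simpl; [lia|]. rewrite length_app. specialize (H b). nia. Qed.

Lemma is_factor_nil w : is_factor [] w.
Proof. exists [], w. reflexivity. Qed.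

Lemma prefix_dec (f : morphism) m (W s : word) v : (forall b, length (f b) <= m) -> W ++ s = flat_map f v ->
  exists v1 v2 t, v = v1 ++ v2 /\ W = flat_map f v1 ++ t /\ length t <= m.
Proof.
  intros Hm. revert W s. induction v as [|b v IH]; intros W s H.
  - simpl in H. apply app_eq_nil in H as [-> ->]. exists [], [], []. simpl; repeat split; lia.
  - simpl in H. apply app_eq_app in H as [l [[H1 H2]|[H1 H2]]].
    + symmetry in H2. destruct (IH l s H2) as [v1 [v2 [t [-> [-> Ht]]]]].
      exists (b :: v1), v2, t. simpl. subst W. rewrite app_assoc. auto.
    + exists [], (b :: v), W. simpl. split; auto. split; auto.
      specialize (Hm b). rewrite H1, length_app in Hm. lia.
Qed.

Lemma infix_dec (f : morphism) m (W : word) v : (forall b, length (f b) <= m) -> is_factor W (flat_map f v) ->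
  exists v', is_factor v' v /\ is_factor (flat_map f v') W /\
             length W <= length (flat_map f v') + 2*m.
Proof.
  intros Hm [p [s H]]. revert p H. induction v as [|b v IH]; intros p H.
  - simpl in H. symmetry in H. apply app_eq_nil in H as [_ H]. apply app_eq_nil in H as [-> _].
    exists []. split; [apply is_factor_nil|]. split; [apply is_factor_nil|]. simpl; lia.
  - simpl in H. symmetry in H. apply app_eq_app in H as [l [[H1 H2]|[H1 H2]]].
    + destruct (IH l H2) as [v' [Hv' Hrest]]. exists v'. split; auto.
      destruct Hv' as [q [r ->]]. exists (b :: q), r. reflexivity.
    + apply app_eq_app in H2 as [l' [[H3 H4]|[H3 H4]]].
      * symmetry in H4. destruct (prefix_dec f m l' s v Hm H4) as [v1 [v2 [t [Hv [Hl' Ht]]]]].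
        exists v1. split; [exists [b], v2; simpl; subst; reflexivity|].
        split; [exists l, t; subst; reflexivity|].
        subst W. rewrite Hl', !length_app. specialize (Hm b). rewrite H1, length_app in Hm. lia.
      * exists []. split; [exists [], (b::v); reflexivity|]. split; [apply is_factor_nil|].
        simpl. specialize (Hm b). rewrite H1, H3, !length_app in Hm. lia.
Qed.

Lemma block_bound (tau : morphism) L b (v' : word) (r : word) : (forall c, length (tau c) <= L) -> (forall c, In b (tau c)) ->
  is_factor v' (flat_map tau r) -> length v' <= L * (cnt b v' + 2).
Proof.
  intros HL Hin Hf. destruct (infix_dec tau L v' r HL Hf) as [r' [_ [Hf' Hlen]]].
  pose proof (len_flat tau r' L HL).
  assert (length r' <= cnt b (flat_map tau r')).
  { clear -Hin. induction r' as [|c r' IH]; simpl; [lia|]. rewrite cnt_app.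
    assert (1 <= cnt b (tau c)) by (apply cnt_In; apply Hin). lia. }
  destruct (cnt_factor b _ _ Hf'). nia.
Qed.

Lemma apply_mid w : apply_morph mid w = w.
Proof. induction w; simpl; f_equal; auto. Qed.

Lemma apply_comp f g w : apply_morph f (apply_morph g w) = apply_morph (mcomp f g) w.
Proof. unfold apply_morph, mcomp. induction w; simpl; auto. rewrite flat_map_app, IHw. reflexivity. Qed.

Lemma prodseg_S sigma m k b : prodseg sigma m (S k) b = apply_morph (sigma m) (prodseg sigma (S m) k b).
Proof. reflexivity. Qed.

Lemma prodseg_add sigma k1 k2 m b :
  prodseg sigma m (k1 + k2) b = apply_morph (prodseg sigma m k1) (prodseg sigma (m + k1) k2 b).
Proof.
  revert m. induction k1; intro m.
  - rewrite Nat.add_0_r. change (prodseg sigma m 0) with mid. rewrite apply_mid. reflexivity.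
  - change (S k1 + k2) with (S (k1 + k2)). rewrite prodseg_S, IHk1.
    change (prodseg sigma m (S k1)) with (mcomp (sigma m) (prodseg sigma (S m) k1)).
    rewrite apply_comp. replace (S m + k1) with (m + S k1) by lia. reflexivity.
Qed.

Definition lenP sigma t :=
  length (prodseg sigma 1 t l1) + length (prodseg sigma 1 t l2) + length (prodseg sigma 1 t l3).

Fixpoint bnd sigma K := match K with 0 => lenP sigma 0 | S K' => bnd sigma K' + lenP sigma (S K') end.

Lemma bnd_spec sigma K t a : t <= K -> length (prodseg sigma 1 t a) <= bnd sigma K.
Proof.
  induction K; intros H.
  - assert (t = 0) by lia. subst. change (bnd sigma 0) with (lenP sigma 0). unfold lenP. destruct a; lia.
  - change (bnd sigma (S K)) with (bnd sigma K + lenP sigma (S K)). destruct (Nat.eq_dec t (S K)).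
    + subst. unfold lenP. destruct a; lia.
    + specialize (IHK ltac:(lia)). lia.
Qed.

Lemma window_length x i n : length (window x i n) = n.
Proof. unfold window. rewrite length_map, length_seq. reflexivity. Qed.

Lemma window_count x a n : count_letter x a n = cnt a (window x 1 n).
Proof.
  induction n; [reflexivity|].
  unfold window. rewrite seq_S, map_app, cnt_app. fold (window x 1 n). rewrite <- IHn.
  change (count_letter x a (S n)) with
    (count_letter x a n + (if letter_eqb (x (Z.of_nat (S n))) a then 1 else 0)).
  cbn [map cnt]. replace (1 + Z.of_nat (0 + n))%Z with (Z.of_nat (S n)) by lia.
  destruct (letter_eqb (x (Z.of_nat (S n))) a); lia.
Qed.

Definition A (sigma : nat -> morphism) a (c : letter -> nat) :=
  cnt a (sigma 1 l1) * c l1 + cnt a (sigma 1 l2) * c l2 + cnt a (sigma 1 l3) * c l3.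

Definition Struct (sigma : nat -> morphism) (x : biword) : Prop :=
  exists N0 D E, 0 < D /\ forall n, N0 <= n -> exists c : letter -> nat,
    (forall b, n <= D * c b + E) /\
    (forall a, A sigma a c <= count_letter x a n <= A sigma a c + E).

Lemma structure X sigma x : represents sigma X -> is_primitive sigma -> X x -> Struct sigma x.
Proof.
  intros Hrep Hprim Hx.
  destruct (Hprim 2 ltac:(lia)) as [N2 [HN2 Hall]].
  set (K := N2 - 2). set (tau := prodseg sigma 2 K).
  set (m := length (sigma 1 l1) + length (sigma 1 l2) + length (sigma 1 l3)).
  set (L := length (tau l1) + length (tau l2) + length (tau l3)).
  assert (Hm : forall b, length (sigma 1 b) <= m) by (intro b; destruct b; unfold m; lia).
  assert (HL : forall b, length (tau b) <= L) by (intro b; destruct b; unfold L; lia).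
  exists (S (bnd sigma K)), (m * L + 1), (2*m*L + 2*m).
  split; [lia|]. intros n Hn.
  destruct ((proj1 (Hrep x)) Hx 1%Z n) as [N [a [HN Hfac]]].
  assert (HNK : K < N - 1).
  { destruct (le_lt_dec (N-1) K) as [Hle|]; [|lia]. exfalso.
    pose proof (bnd_spec sigma K (N-1) a Hle).
    destruct Hfac as [p [s Hfac]]. apply (f_equal (@length _)) in Hfac.
    rewrite !length_app, window_length in Hfac. lia. }
  replace (N - 1) with (S (K + (N - 2 - K))) in Hfac by lia.
  rewrite prodseg_S, prodseg_add in Hfac. fold tau in Hfac.
  unfold apply_morph in Hfac.
  destruct (infix_dec (sigma 1) m _ _ Hm Hfac) as [v' [Hv' [Hfv' Hlen]]].
  exists (fun b => cnt b v'). rewrite window_length in Hlen.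
  pose proof (len_flat (sigma 1) v' m Hm).
  split.
  - intro b. assert (Hin : forall c, In b (tau c)) by (intro c; apply Hall).
    pose proof (block_bound tau L b v' _ HL Hin Hv').
    nia.
  - intro b. rewrite window_count. destruct (cnt_factor b _ _ Hfv') as [H1 H2].
    rewrite window_length in H2. unfold A. rewrite cnt_flat in H1, H2. nia.
Qed.
Open Scope R_scope.

Lemma const_cv c : Un_cv (fun _ => c) c.
Proof. intros eps Heps. exists 0%nat. intros. unfold R_dist. rewrite Rminus_diag, Rabs_R0. lra. Qed.

Definition Hcv (x : biword) (lam : letter -> R) :=
  forall a, Un_cv (fun n => INR (count_letter x a n) / INR n) (lam a).

Lemma freq_pos x lam (w1 w2 w3 : Z) : Hcv x lam ->
  (exists N0 D K, (0 < D)%Z /\ forall n, (N0 <= n)%nat ->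
     (Z.of_nat n <= D * (w1 * Z.of_nat (count_letter x l1 n) + w2 * Z.of_nat (count_letter x l2 n)
        + w3 * Z.of_nat (count_letter x l3 n)) + K)%Z) ->
  IZR w1 * lam l1 + IZR w2 * lam l2 + IZR w3 * lam l3 > 0.
Proof.
  intros Hc [N0 [D [K [HD HB]]]].
  set (f := fun a n => INR (count_letter x a n) / INR n).
  set (v := fun n => IZR w1 * f l1 n + IZR w2 * f l2 n + IZR w3 * f l3 n).
  assert (Hv : Un_cv v (IZR w1 * lam l1 + IZR w2 * lam l2 + IZR w3 * lam l3)).
  { unfold v. apply CV_plus; [apply CV_plus|]; apply CV_mult; try apply const_cv; apply Hc. }
  destruct (Rle_or_lt (IZR w1 * lam l1 + IZR w2 * lam l2 + IZR w3 * lam l3) 0) as [Hle|]; [|lra].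
  exfalso.
  assert (HDr : 0 < IZR D) by (apply IZR_lt; auto).
  destruct (Hv (/ (2 * IZR D))) as [N1 HN1]. { apply Rinv_0_lt_compat; lra. }
  set (n := (N0 + N1 + Z.to_nat (2*K) + 1)%nat).
  specialize (HN1 n ltac:(unfold n; lia)). specialize (HB n ltac:(unfold n; lia)).
  assert (Hn2K : (2 * K < Z.of_nat n)%Z) by (unfold n; lia).
  apply IZR_lt in Hn2K. apply IZR_le in HB.
  rewrite plus_IZR, mult_IZR, !plus_IZR, !mult_IZR, <- !INR_IZR_INZ in HB.
  rewrite mult_IZR, <- INR_IZR_INZ in Hn2K.
  assert (Hnpos : 0 < INR n) by (apply lt_0_INR; unfold n; lia).
  assert (HS : IZR w1 * INR (count_letter x l1 n) + IZR w2 * INR (count_letter x l2 n)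
     + IZR w3 * INR (count_letter x l3 n) = INR n * v n).
  { unfold v, f. field. lra. }
  rewrite HS in HB.
  unfold R_dist in HN1. apply Rabs_def2 in HN1. destruct HN1 as [HN1 _].
  assert (Hvn : v n < / (2 * IZR D)) by lra.
  assert (H3 : IZR D * INR n * v n < IZR D * INR n * / (2 * IZR D)).
  { apply Rmult_lt_compat_l; [nra|lra]. }
  replace (IZR D * INR n * / (2 * IZR D)) with (INR n / 2) in H3 by (field; lra).
  nra.
Qed.

Lemma cv_nonneg u l : Un_cv u l -> (forall n, 0 <= u n) -> 0 <= l.
Proof.
  intros H Hu. destruct (Rle_or_lt 0 l); auto.
  destruct (H (-l)) as [N HN]; [lra|]. specialize (HN N (Nat.le_refl N)).
  unfold R_dist in HN. specialize (Hu N). apply Rabs_def2 in HN. lra.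
Qed.

Lemma lam_nonneg x lam a : Hcv x lam -> 0 <= lam a.
Proof.
  intros Hc. apply (cv_nonneg _ _ (Hc a)). intro n. destruct n.
  - simpl. unfold Rdiv. rewrite Rmult_0_l. lra.
  - unfold Rdiv. apply Rmult_le_pos; [apply pos_INR|].
    left. apply Rinv_0_lt_compat, lt_0_INR. lia.
Qed.

Lemma fwd_generic sigma x lam (w1 w2 w3 : Z) : Struct sigma x -> Hcv x lam ->
  (forall E : nat, exists Kf : Z, (0 <= Kf)%Z /\ forall (c X : letter -> nat),
     (forall a, (A sigma a c <= X a <= A sigma a c + E)%nat) ->
     exists b0, (Z.of_nat (c b0) - Kf <= w1 * Z.of_nat (X l1) + w2 * Z.of_nat (X l2)
                  + w3 * Z.of_nat (X l3))%Z) ->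
  IZR w1 * lam l1 + IZR w2 * lam l2 + IZR w3 * lam l3 > 0.
Proof.
  intros [N0 [D [E [HD HS]]]] Hc Hlin.
  destruct (Hlin E) as [Kf [HKf Hl]].
  apply (freq_pos x lam w1 w2 w3 Hc).
  exists N0, (Z.of_nat D), (Z.of_nat E + Z.of_nat D * Kf)%Z. split; [lia|].
  intros n Hn. destruct (HS n Hn) as [c [Hcb HX]].
  destruct (Hl c (fun a => count_letter x a n) HX) as [b0 Hb0].
  specialize (Hcb b0). cbn beta in Hb0.
  set (S := (w1 * Z.of_nat (count_letter x l1 n) + w2 * Z.of_nat (count_letter x l2 n)
        + w3 * Z.of_nat (count_letter x l3 n))%Z) in *.
  assert (Z.of_nat D * (Z.of_nat (c b0) - Kf) <= Z.of_nat D * S)%Z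
    by (apply Z.mul_le_mono_nonneg_l; lia).
  nia.
Qed.

Lemma dimg k b : mcomp (pi l2 l1 l3) (delta k) b =
  match b with l1 => [l2] | l2 => [l2;l1] ++ repeat l3 k | l3 => [l2;l1] ++ repeat l3 (S k) end.
Proof.
  assert (H : forall j, flat_map (pi l2 l1 l3) (repeat l3 j) = repeat l3 j)
    by (induction j; simpl; congruence).
  destruct b; unfold mcomp, apply_morph, delta; simpl; [reflexivity| |]; rewrite ?H; reflexivity.
Qed.

Lemma cnt_rep a k : cnt a (repeat l3 k) = (k * cnt a [l3])%nat.
Proof. induction k; simpl; [lia|]. rewrite IHk. destruct a; simpl; lia. Qed.

Ltac prep hs :=
  let E := fresh "E" in intro E; eexists; split; [|intros c X HX;
  pose proof (HX l1) as H1; pose proof (HX l2) as H2; pose proof (HX l3) as H3;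
  clear HX; unfold A in H1, H2, H3; rewrite !hs in H1, H2, H3;
  rewrite ?dimg in H1, H2, H3; rewrite ?cnt_app, ?cnt_rep in H1, H2, H3; simpl in H1, H2, H3]; cycle 1.

Section Fwd.
Variables (sigma : nat -> morphism) (x : biword) (lam : letter -> R).
Hypothesis HS : Struct sigma x.
Hypothesis HC : Hcv x lam.

Lemma fwd_alpha : same_morph (sigma 1%nat) alpha -> lam l1 > lam l2 + lam l3.
Proof.
  intros hs. pose proof (fwd_generic sigma x lam 1 (-1) (-1) HS HC) as G.
  enough (IZR 1 * lam l1 + IZR (-1) * lam l2 + IZR (-1) * lam l3 > 0) by lra.
  apply G. prep hs. exists l1. instantiate (1 := (2 * Z.of_nat E)%Z). lia. lia.
Qed.

Lemma fwd_eta : same_morph (sigma 1%nat) (mcomp (mcomp (pi l1 l3 l2) eta) (pi l3 l2 l1)) ->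
  lam l2 < lam l1 /\ lam l3 < lam l1 /\ lam l1 < lam l2 + lam l3.
Proof.
  intros hs.
  pose proof (fwd_generic sigma x lam 1 (-1) 0 HS HC) as G1.
  pose proof (fwd_generic sigma x lam 1 0 (-1) HS HC) as G2.
  pose proof (fwd_generic sigma x lam (-1) 1 1 HS HC) as G3.
  enough (IZR 1 * lam l1 + IZR (-1) * lam l2 + IZR 0 * lam l3 > 0 /\
          IZR 1 * lam l1 + IZR 0 * lam l2 + IZR (-1) * lam l3 > 0 /\
          IZR (-1) * lam l1 + IZR 1 * lam l2 + IZR 1 * lam l3 > 0) by lra.
  split; [|split].
  - apply G1. prep hs. exists l2. instantiate (1 := Z.of_nat E). lia. lia.
  - apply G2. prep hs. exists l3. instantiate (1 := Z.of_nat E). lia. lia.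
  - apply G3. prep hs. exists l1. instantiate (1 := Z.of_nat E). lia. lia.
Qed.

Lemma fwd_beta : same_morph (sigma 1%nat) (mcomp (mcomp (pi l3 l1 l2) beta) (pi l2 l1 l3)) ->
  lam l2 < lam l1 < lam l3.
Proof.
  intros hs.
  pose proof (fwd_generic sigma x lam 1 (-1) 0 HS HC) as G1.
  pose proof (fwd_generic sigma x lam (-1) 0 1 HS HC) as G2.
  enough (IZR 1 * lam l1 + IZR (-1) * lam l2 + IZR 0 * lam l3 > 0 /\
          IZR (-1) * lam l1 + IZR 0 * lam l2 + IZR 1 * lam l3 > 0) by lra.
  split.
  - apply G1. prep hs. exists l1. instantiate (1 := Z.of_nat E). lia. lia.
  - apply G2. prep hs. exists l2. instantiate (1 := Z.of_nat E). lia. lia.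
Qed.

Lemma fwd_gamma : same_morph (sigma 1%nat) (mcomp (pi l2 l1 l3) gamma) ->
  lam l3 < lam l1 < lam l2.
Proof.
  intros hs.
  pose proof (fwd_generic sigma x lam 1 0 (-1) HS HC) as G1.
  pose proof (fwd_generic sigma x lam (-1) 1 0 HS HC) as G2.
  enough (IZR 1 * lam l1 + IZR 0 * lam l2 + IZR (-1) * lam l3 > 0 /\
          IZR (-1) * lam l1 + IZR 1 * lam l2 + IZR 0 * lam l3 > 0) by lra.
  split.
  - apply G1. prep hs. exists l2. instantiate (1 := Z.of_nat E). lia. lia.
  - apply G2. prep hs. exists l1. instantiate (1 := Z.of_nat E). lia. lia.
Qed.

Lemma fwd_delta k : (1 <= k)%nat -> same_morph (sigma 1%nat) (mcomp (pi l2 l1 l3) (delta k)) ->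
  lam l1 < lam l2 /\ lam l1 < lam l3 /\ INR k * lam l1 < lam l3 < INR (S k) * lam l1.
Proof.
  intros Hk hs.
  pose proof (fwd_generic sigma x lam (-1) 1 0 HS HC) as G1.
  pose proof (fwd_generic sigma x lam (-1) 0 1 HS HC) as G2.
  pose proof (fwd_generic sigma x lam (- Z.of_nat k) 0 1 HS HC) as G3.
  pose proof (fwd_generic sigma x lam (Z.of_nat k + 1) 0 (-1) HS HC) as G4.
  rewrite opp_IZR, <- INR_IZR_INZ in G3.
  rewrite plus_IZR, <- INR_IZR_INZ in G4. rewrite S_INR.
  enough (IZR (-1) * lam l1 + IZR 1 * lam l2 + IZR 0 * lam l3 > 0 /\
          IZR (-1) * lam l1 + IZR 0 * lam l2 + IZR 1 * lam l3 > 0 /\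
          - INR k * lam l1 + IZR 0 * lam l2 + IZR 1 * lam l3 > 0 /\
          (INR k + IZR 1) * lam l1 + IZR 0 * lam l2 + IZR (-1) * lam l3 > 0) by lra.
  split; [|split; [|split]].
  - apply G1. prep hs. exists l1. instantiate (1 := Z.of_nat E). lia. lia.
  - apply G2. prep hs. exists l3. instantiate (1 := Z.of_nat E). nia. lia.
  - apply G3. prep hs. exists l3. instantiate (1 := (Z.of_nat k * Z.of_nat E)%Z). nia. nia.
  - apply G4. prep hs. exists l2. instantiate (1 := Z.of_nat E). nia. lia.
Qed.
End Fwd.

Theorem lemma6p8 (X : subshift) (sigma : nat -> morphism) (lam : letter -> R) :
  shift_space X -> minimal X -> dendric X ->
  directive sigma -> is_primitive sigma -> SSS_adic sigma -> represents sigma X ->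
  has_letter_frequencies X lam ->
  (same_morph (sigma 1%nat) alpha \/
   same_morph (sigma 1%nat) (mcomp (mcomp (pi l1 l3 l2) eta) (pi l3 l2 l1)) \/
   same_morph (sigma 1%nat) (mcomp (mcomp (pi l3 l1 l2) beta) (pi l2 l1 l3)) \/
   same_morph (sigma 1%nat) (mcomp (pi l2 l1 l3) gamma) \/
   (exists k : nat, (1 <= k)%nat /\ same_morph (sigma 1%nat) (mcomp (pi l2 l1 l3) (delta k)))) ->
  ((lam l1 > lam l2 + lam l3)%R <-> same_morph (sigma 1%nat) alpha) /\
  ((lam l2 < lam l1 /\ lam l3 < lam l1 /\ lam l1 < lam l2 + lam l3)%R <->
     same_morph (sigma 1%nat) (mcomp (mcomp (pi l1 l3 l2) eta) (pi l3 l2 l1))) /\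
  ((lam l2 < lam l1 < lam l3)%R <->
     same_morph (sigma 1%nat) (mcomp (mcomp (pi l3 l1 l2) beta) (pi l2 l1 l3))) /\
  ((lam l3 < lam l1 < lam l2)%R <->
     same_morph (sigma 1%nat) (mcomp (pi l2 l1 l3) gamma)) /\
  (forall k : nat, (1 <= k)%nat ->
     ((lam l1 < lam l2 /\ lam l1 < lam l3 /\
       INR k * lam l1 < lam l3 < INR (S k) * lam l1)%R <->
      same_morph (sigma 1%nat) (mcomp (pi l2 l1 l3) (delta k)))).
Proof.
  intros [Hcl [Hinv Hlet]] _ _ _ Hprim _ Hrep Hfreq Hcase.
  destruct (Hlet l1) as [x [Hx _]].
  pose proof (structure X sigma x Hrep Hprim Hx) as HS.
  assert (HC : Hcv x lam) by (intro a; apply Hfreq; exact Hx).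
  pose proof (lam_nonneg x lam l1 HC) as N1.
  pose proof (lam_nonneg x lam l2 HC) as N2.
  pose proof (lam_nonneg x lam l3 HC) as N3.
  pose proof (fwd_alpha sigma x lam HS HC) as F1.
  pose proof (fwd_eta sigma x lam HS HC) as F2.
  pose proof (fwd_beta sigma x lam HS HC) as F3.
  pose proof (fwd_gamma sigma x lam HS HC) as F4.
  pose proof (fwd_delta sigma x lam HS HC) as F5.
  split; [|split; [|split; [|split]]].
  - split; [|exact F1]. intro P.
    destruct Hcase as [Q|[Q|[Q|[Q|[k' [Hk' Q]]]]]]; auto;
      [apply F2 in Q|apply F3 in Q|apply F4 in Q|apply (F5 k' Hk') in Q]; lra.
  - split; [|exact F2]. intro P.
    destruct Hcase as [Q|[Q|[Q|[Q|[k' [Hk' Q]]]]]]; auto;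
      [apply F1 in Q|apply F3 in Q|apply F4 in Q|apply (F5 k' Hk') in Q]; lra.
  - split; [|exact F3]. intro P.
    destruct Hcase as [Q|[Q|[Q|[Q|[k' [Hk' Q]]]]]]; auto;
      [apply F1 in Q|apply F2 in Q|apply F4 in Q|apply (F5 k' Hk') in Q]; lra.
  - split; [|exact F4]. intro P.
    destruct Hcase as [Q|[Q|[Q|[Q|[k' [Hk' Q]]]]]]; auto;
      [apply F1 in Q|apply F2 in Q|apply F3 in Q|apply (F5 k' Hk') in Q]; lra.
  - intros k Hk. split; [|exact (F5 k Hk)]. intro P.
    destruct Hcase as [Q|[Q|[Q|[Q|[k' [Hk' Q]]]]]];
      [apply F1 in Q; lra|apply F2 in Q; lra|apply F3 in Q; lra|apply F4 in Q; lra|].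
    destruct (Nat.lt_total k k') as [Hlt|[->|Hlt]]; [|exact Q|];
      apply (F5 k' Hk') in Q; exfalso.
    + assert (INR (S k) <= INR k') by (apply le_INR; lia).
      assert (INR (S k) * lam l1 <= INR k' * lam l1) by (apply Rmult_le_compat_r; lra). lra.
    + assert (INR (S k') <= INR k) by (apply le_INR; lia).
      assert (INR (S k') * lam l1 <= INR k * lam l1) by (apply Rmult_le_compat_r; lra). lra.
Qed.
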